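(* Let $(P,e)$, $P\in\mathcal{T}_k$, be a tree pattern, and let $X,Y,Y'\subseteq[k]$ be defined with respect to $(P,e)$ as below. Let $i\in X\cup Y\cup Y'$ be a non-root vertex of $P$ with $e(i)=0$, and define $e'\colon[k]\setminus\{r(P)\}\to\{0,1\}$ by $e'(i)=1$ and $e'(j)=e(j)$ for all $j\ne i$. Then $\mathcal{T}_n(P,e)=\mathcal{T}_n(P,e')$ for all $n\ge0$.
   Context: $\mathcal{T}_n$ is the set of binary trees on $n$ vertices labeled $1,\dots,n$ by the search tree property (left-subtree vertices of $i$ smaller than $i$, right-subtree vertices larger). $c_L(i),c_R(i),p(i)$: left child, right child, parent ($\varepsilon$ if nonexistent); $c_L^\ell,c_R^\ell$ denote iterates; $r(T)$ root; $L(i),R(i)$ subtrees rooted at $c_L(i),c_R(i)$. A tree pattern is $(P,e)$, $P\in\mathcal{T}_k$, $e\colon[k]\setminus\{r(P)\}\to\{0,1\}$ ($e(i)=1$: edge $(i,p(i))$ contiguous; $e(i)=0$: non-contiguous). $T\in\mathcal{T}_n$ contains $(P,e)$ if there is an injection $f\colon[k]\to[n]$ such that for every non-root $i$ of $P$: if $e(i)=1$, $f(i)$ is the left (resp. right) child of $f(p(i))$ when $i$ is the left (resp. right) child of $p(i)$; if $e(i)=0$, $f(i)\in L(f(p(i)))$ (resp. $R(f(p(i)))$) accordingly. $\mathcal{T}_n(P,e)$ is the set of $T\in\mathcal{T}_n$ avoiding $(P,e)$. For $i\in[k]$: $B_L'(i)=\{c_L^\ell(i):\ell\ge0,\ c_L^\ell(i)\text{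 exists, and } e(c_L^j(i))=1\text{ for } j=1,\dots,\ell\}$; $A_R(i)=\{a\in[k]: i=c_R^\ell(a)\text{ for some }\ell\ge0\text{ with } e(c_R^j(a))=1\text{ for } j=1,\dots,\ell\}$, and $a_R(i)$ is the topmost (closest to the root) vertex of $A_R(i)$. $B_R'(i)$, $A_L(i)$, $a_L(i)$ are defined in the same way with left and right interchanged. Then $X=\{i: c_L(i)=\varepsilon\text{ and } c_R(i)=\varepsilon\}$ (the leaves); $Y$ is the set of $i$ such that: $c_L(i)\ne\varepsilon$; $i=c_R(p(i))$; $A_R(p(i))=\{p(i)\}$ or $B_L'(i)=\{i\}$; $c_L(j)=\varepsilon$ for all $j\in A_R(p(i))$; $c_R(j)=\varepsilon$ for all $j\in B_L'(i)$; and $a_R(p(i))=r(P)$ or $e(a_R(p(i)))=0$; $Y'$ is the set of $i$ such that: $c_R(i)\ne\varepsilon$; $i=c_L(p(i))$; $A_L(p(i))=\{p(i)\}$ or $B_R'(i)=\{i\}$; $c_R(j)=\varepsilon$ for all $j\in A_L(p(i))$; $c_L(j)=\varepsilon$ for all $j\in B_R'(i)$; and $a_L(p(i))=r(P)$ or $e(a_L(p(i)))=0$. *)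

(* Defs.v *)
From mathcomp Require Import all_boot.
Set Implicit Arguments. Unset Strict Implicit. Unset Printing Implicit Defensive.

(* Unlabeled binary tree shapes.  A shape with n nodes carries a unique
   labeling by 1..n satisfying the search-tree property: the in-order
   labeling.  Hence T_n = shapes of size n, and vertices are labels in 1..n. *)
Inductive btree := BLeaf | BNode of btree & btree.

Fixpoint bsize (t : btree) : nat :=
  match t with BLeaf => 0 | BNode l r => (bsize l + bsize r).+1 end.

(* root label (0 for the empty tree, never used) *)
Definition broot (t : btree) : nat :=
  match t with BLeaf => 0 | BNode l _ => (bsize l).+1 end.

(* child on side s (false = left, true = right) of vertex i; None = epsilon *)
Fixpoint child (s : bool) (t : btree) (i : nat) : option nat :=
  match t with
  | BLeaf => None
  | BNode l r =>
      let m := (bsize l).+1 in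
      if i == m then
        (let c := if s then r else l in
         match c with
         | BLeaf => None
         | BNode _ _ => Some (if s then broot r + m else broot l)
         end)
      else if i < m then child s l i
      else omap (fun j => j + m) (child s r (i - m))
  end.

Definition cL := child false.
Definition cR := child true.

Fixpoint par (t : btree) (i : nat) : option nat :=
  match t with
  | BLeaf => None
  | BNode l r =>
      let m := (bsize l).+1 in
      if i == m then None
      else if i < m then (if i == broot l then Some m else par l i)
      else if i - m == broot r then Some m
      else omap (fun j => j + m) (par r (i - m))
  end.

Definition vertex (t : btree) (i : nat) : Prop := 1 <= i <= bsize t.

Inductive desc (t : btree) (a : nat) : nat -> Prop :=
| desc_refl : desc t a a
| desc_step : forall b c s, desc t a b -> child s t b = Some c -> desc t a c.

(* b lies in L(a) (s = false) or R(a) (s = true): subtree rooted at c_s(a) *)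
Definition in_side_sub (s : bool) (t : btree) (a b : nat) : Prop :=
  exists c, child s t a = Some c /\ desc t c b.

(* Tree pattern (P, e): e : nat -> bool, only its values on non-root vertices
   of P matter (true = contiguous edge, false = non-contiguous). *)
Definition contains (T P : btree) (e : nat -> bool) : Prop :=
  exists f : nat -> nat,
    (forall i, vertex P i -> vertex T (f i)) /\
    (forall i j, vertex P i -> vertex P j -> f i = f j -> i = j) /\
    (forall i, vertex P i -> i <> broot P ->
       forall p s, par P i = Some p -> child s P p = Some i ->
         if e i then child s T (f p) = Some (f i)
         else in_side_sub s T (f p) (f i)).

Definition avoids (T P : btree) (e : nat -> bool) : Prop := ~ contains T P e.

Definition Tn_avoid (n : nat) (P : btree) (e : nat -> bool) (T : btree) : Prop :=
  bsize T = n /\ avoids T P e.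

Fixpoint iter_child (s : bool) (t : btree) (l : nat) (i : nat) : option nat :=
  match l with
  | 0 => Some i
  | l'.+1 => obind (child s t) (iter_child s t l' i)
  end.

(* B'_s(i) : j = c_s^l(i) with e(c_s^m(i)) = 1 for m = 1..l
   (s = false gives B_L', s = true gives B_R') *)
Definition inB' (s : bool) (P : btree) (e : nat -> bool) (i j : nat) : Prop :=
  exists l, iter_child s P l i = Some j /\
    forall m, 1 <= m <= l -> exists c, iter_child s P m i = Some c /\ e c.

(* A_s(i) : a in [k] with i = c_s^l(a), e(c_s^m(a)) = 1 for m = 1..l
   (s = true gives A_R, s = false gives A_L) *)
Definition inA (s : bool) (P : btree) (e : nat -> bool) (i a : nat) : Prop :=
  vertex P a /\ exists l, iter_child s P l a = Some i /\
    forall m, 1 <= m <= l -> exists c, iter_child s P m a = Some c /\ e c.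

Definition is_top_A (s : bool) (P : btree) (e : nat -> bool) (i a : nat) : Prop :=
  inA s P e i a /\ forall b, inA s P e i b -> desc P a b.

Definition inX (P : btree) (i : nat) : Prop :=
  vertex P i /\ cL P i = None /\ cR P i = None.

(* Generic Y-set: d is the side of i's own child.  Y = Ygen false (d = left),
   Y' = Ygen true (d = right). *)
Definition inYgen (d : bool) (P : btree) (e : nat -> bool) (i : nat) : Prop :=
  vertex P i /\
  child d P i <> None /\
  exists p, par P i = Some p /\ child (~~ d) P p = Some i /\
    ((forall a, inA (~~ d) P e p a <-> a = p) \/
     (forall j, inB' d P e i j <-> j = i)) /\
    (forall j, inA (~~ d) P e p j -> child d P j = None) /\
    (forall j, inB' d P e i j -> child (~~ d) P j = None) /\
    (forall a, is_top_A (~~ d) P e p a -> a = broot P \/ e a = false).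

Definition inY := inYgen false.
Definition inY' := inYgen true.

Definition set_contig (e : nat -> bool) (i : nat) : nat -> bool :=
  fun j => if j == i then true else e j.

(* Main.v *)
Require Import Defs.
From mathcomp Require Import all_boot zify.
Set Implicit Arguments. Unset Strict Implicit. Unset Printing Implicit Defensive.

Ltac clean := repeat match goal with
  | H : is_true (_ && _) |- _ => move/andP: H => [? ?]
  | H : _ /\ _ |- _ => destruct H end.
Ltac vsolve := clean; repeat match goal with
  | |- _ /\ _ => split | |- is_true (_ && _) => apply/andP; split end; lia.

Lemma child_vertex s t a c : child s t a = Some c -> vertex t a /\ vertex t c.
Proof.
rewrite /vertex; elim: t a c => [|l IHl r IHr] a c //=.
case: ifP => [/eqP ->|_].
  case: s {IHl IHr}; [case: r => [|r1 r2] //= [<-]| case: l => [|l1 l2] //= [<-]]; 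
  vsolve.
case: ifP => [lt /IHl ?| ge]. vsolve.
case E: child => [c'|] //= [<-].
move: (IHr _ _ E) => ?. vsolve.
Qed.

Lemma par_root t : par t (broot t) = None.
Proof. by case: t => //= l r; rewrite eqxx. Qed.

Lemma child_l s l r a : a < (bsize l).+1 -> child s (BNode l r) a = child s l a.
Proof. by move=> H /=; rewrite ltn_eqF // H. Qed.

Lemma child_r s l r a : (bsize l).+1 < a ->
  child s (BNode l r) a = omap (fun j => j + (bsize l).+1) (child s r (a - (bsize l).+1)).
Proof. by move=> H /=; rewrite gtn_eqF // ltnNge ltnW. Qed.

Lemma par_l l r a : a < (bsize l).+1 ->
  par (BNode l r) a = if a == broot l then Some (bsize l).+1 else par l a.
Proof. by move=> H /=; rewrite ltn_eqF // H. Qed.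

Lemma par_r l r a : (bsize l).+1 < a ->
  par (BNode l r) a = if a - (bsize l).+1 == broot r then Some (bsize l).+1
     else omap (fun j => j + (bsize l).+1) (par r (a - (bsize l).+1)).
Proof. by move=> H /=; rewrite gtn_eqF // ltnNge ltnW. Qed.

Lemma child_root s l r : child s (BNode l r) (bsize l).+1 =
  if s then (if r is BNode _ _ then Some (broot r + (bsize l).+1) else None)
  else (if l is BNode _ _ then Some (broot l) else None).
Proof. by rewrite /= eqxx; case: s. Qed.

Lemma child_par s t a c : child s t a = Some c -> par t c = Some a.
Proof.
elim: t a c => [|l IHl r IHr] a c //.
have [->|ne] := eqVneq a (bsize l).+1.
  rewrite child_root; case: s {IHl IHr}.
    case Er: r => [|r1 r2] // [<-]; rewrite par_r; last (rewrite /=; lia).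
    by rewrite addnK eqxx.
  case El: l => [|l1 l2] // [<-]; rewrite par_l; last (rewrite /=; lia).
  by rewrite eqxx.
have [lt|ge] := ltnP a (bsize l).+1.
  rewrite child_l // => E.
  have [_ /andP [? ?]] := child_vertex E.
  rewrite par_l; last lia.
  rewrite (IHl _ _ E); case: ifP => // /eqP Ec.
  by move: (IHl _ _ E); rewrite Ec par_root.
rewrite child_r; last lia.
case E: child => [c'|] // [<-].
have [/andP [? ?] /andP [? ?]] := child_vertex E.
rewrite par_r; last lia.
rewrite addnK (IHr _ _ E); case: ifP => [/eqP Ec|_]; last by rewrite /= subnK //; lia.
by move: (IHr _ _ E); rewrite Ec par_root.
Qed.

Fixpoint walk (t : btree) (a : nat) (ms : seq bool) : option nat :=
  match ms with
  | [::] => Some a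
  | s :: ms' => obind (fun c => walk t c ms') (child s t a)
  end.

Lemma walkE t a s ms : walk t a (s :: ms) = obind (fun c => walk t c ms) (child s t a).
Proof. by []. Qed.

Lemma walk_cat t a ms1 ms2 :
  walk t a (ms1 ++ ms2) = obind (fun b => walk t b ms2) (walk t a ms1).
Proof.
elim: ms1 a => [|s ms1 IH] a //=.
by case: child => //= c; rewrite IH.
Qed.

Lemma walk_catS t a b ms1 ms2 : walk t a ms1 = Some b ->
  walk t a (ms1 ++ ms2) = walk t b ms2.
Proof. by rewrite walk_cat => ->. Qed.

Lemma walk_cat_inv t a c ms1 ms2 : walk t a (ms1 ++ ms2) = Some c ->
  exists b, walk t a ms1 = Some b /\ walk t b ms2 = Some c.
Proof. rewrite walk_cat; case: walk => //= b; by exists b. Qed.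

Lemma walk_cons t a s ms b : walk t a (s :: ms) = Some b ->
  exists c, child s t a = Some c /\ walk t c ms = Some b.
Proof. rewrite /=; case: child => //= c; by exists c. Qed.

Lemma walk_vertex t a ms b : walk t a ms = Some b -> vertex t a -> vertex t b.
Proof.
elim: ms a => [|s ms IH] a /=; first by case=> ->.
case E: child => [c|] //= W _. have [_ ?] := child_vertex E. exact: IH W _.
Qed.

Lemma walk_l l r a ms : a < (bsize l).+1 ->
  walk (BNode l r) a ms = walk l a ms.
Proof.
elim: ms a => [|s ms IH] a // lt.
rewrite !walkE child_l //. case E: child => [c|] //=.
have [_ /andP [? ?]] := child_vertex E. apply: IH. lia.
Qed.

Lemma walk_r l r a ms : (bsize l).+1 < a ->
  walk (BNode l r) a ms = omap (fun j => j + (bsize l).+1) (walk r (a - (bsize l).+1) ms).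
Proof.
elim: ms a => [|s ms IH] a lt; first by rewrite /= subnK //; lia.
rewrite !walkE child_r //. case E: child => [c|] //=.
have [_ /andP [? ?]] := child_vertex E. rewrite IH; last lia.
by rewrite addnK.
Qed.

Lemma walk_side t a s ms b : walk t a (s :: ms) = Some b ->
  if s then a < b else b < a.
Proof.
elim: t a b => [|l IHl r IHr] a b //.
have [->|ne] := eqVneq a (bsize l).+1.
  rewrite walkE child_root; case: s {IHl IHr}.
    case Er: r => [|r1 r2] //= W.
    rewrite walk_r in W; last (rewrite /=; lia).
    move: W; case W': walk => [b'|] //= [<-].
    have := walk_vertex W'; rewrite /vertex /= => H.
    have : 0 < b' <= (bsize r1 + bsize r2).+1 by apply: H; vsolve.
    lia.
  case El: l => [|l1 l2] //= W.
  rewrite walk_l in W; last (rewrite /=; lia).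
  have := walk_vertex W; rewrite /vertex /= => H.
  have : 0 < b <= (bsize l1 + bsize l2).+1 by apply: H; vsolve.
  lia.
have [lt|ge] := ltnP a (bsize l).+1.
  rewrite walk_l //. exact: IHl.
rewrite walk_r; last lia.
case W: walk => [b'|] //= [<-].
have := IHr _ _ W. case: s {IHl IHr} W => W; lia.
Qed.

Lemma walk_self t a ms : walk t a ms = Some a -> ms = [::].
Proof. case: ms => // s ms /walk_side; case: s; by rewrite ltnn. Qed.

Lemma side_disj t a b s ms1 ms2 :
  walk t a (s :: ms1) = Some b -> walk t a (~~ s :: ms2) = Some b -> False.
Proof. move=> /walk_side H1 /walk_side; case: s H1 => /= ? ?; lia. Qed.

Lemma child_walk s t a c : child s t a = Some c -> walk t a [:: s] = Some c.
Proof. by rewrite walkE => ->. Qed.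

Lemma child_side_uniq s s' t a c : child s t a = Some c -> child s' t a = Some c -> s = s'.
Proof.
move=> /child_walk H1 /child_walk H2; case: (eqVneq s s') => // ne.
have E : s' = ~~ s by case: s s' ne {H1 H2} => [] [].
by rewrite E in H2; case: (side_disj H1 H2).
Qed.

Lemma desc_first t a b c s : child s t a = Some c -> desc t c b -> desc t a b.
Proof.
move=> E; elim => [|b0 c0 s0 _ IH E0]; first exact: (desc_step (desc_refl t a) E).
exact: desc_step IH E0.
Qed.

Lemma walk_desc t a ms b : walk t a ms = Some b -> desc t a b.
Proof.
elim: ms a => [|s ms IH] a /=; first by case=> ->; exact: desc_refl.
case E: child => [c|] //= W. exact: desc_first E (IH _ W).
Qed.

Lemma desc_walk t a b : desc t a b -> exists ms, walk t a ms = Some b.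
Proof.
elim => [|b0 c s _ [ms W] E]; first by exists [::].
exists (rcons ms s); by rewrite -cats1 (walk_catS _ W) walkE E.
Qed.

Lemma side_walk s t a b : in_side_sub s t a b <-> exists ms, walk t a (s :: ms) = Some b.
Proof.
split.
  move=> [c [E /desc_walk [ms W]]]; exists ms; by rewrite walkE E.
by move=> [ms /walk_cons [c [E W]]]; exists c; split => //; exact: walk_desc W.
Qed.

Lemma root_reach t v : vertex t v -> exists ms, walk t (broot t) ms = Some v.
Proof.
elim: t v => [|l IHl r IHr] v; first by rewrite /vertex /=; lia.
rewrite /vertex /= => H.
have [->|ne] := eqVneq v (bsize l).+1; first by exists [::].
have [lt|ge] := ltnP v (bsize l).+1.
  have Hv : vertex l v by rewrite /vertex; vsolve.
  have [ms W] := IHl _ Hv.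
  exists (false :: ms); rewrite walkE child_root.
  case El: l W Hv => [|l1 l2] W Hv; first by move: Hv; rewrite /vertex /=; lia.
  rewrite /= walk_l -El //; last (rewrite El /=; lia).
  by rewrite El.
have Hv : vertex r (v - (bsize l).+1) by rewrite /vertex; vsolve.
have [ms W] := IHr _ Hv.
exists (true :: ms); rewrite walkE child_root.
case Er: r W Hv => [|r1 r2] W Hv; first by move: Hv; rewrite /vertex /=; lia.
rewrite /= walk_r; last (rewrite /=; lia).
by rewrite addnK W /= subnK //; lia.
Qed.

Lemma lift_l l r x ms y : x < (bsize l).+1 -> walk l x ms = Some y ->
  walk (BNode l r) x ms = Some y.
Proof. by move=> H; rewrite walk_l. Qed.

Lemma lift_r l r x ms y : 0 < x -> walk r x ms = Some y ->
  walk (BNode l r) (x + (bsize l).+1) ms = Some (y + (bsize l).+1).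
Proof. by move=> H W; rewrite walk_r ?addnK ?W //; lia. Qed.

Lemma root_l l r u : vertex l u -> exists ms, walk (BNode l r) (bsize l).+1 (false :: ms) = Some u.
Proof.
move=> Hu; have [ms W] := root_reach Hu; exists ms.
rewrite walkE child_root; case: l Hu W => [|l1 l2] Hu W; first by move: Hu; rewrite /vertex /=; lia.
rewrite /= walk_l //= ; lia.
Qed.

Lemma root_r l r v : vertex r v -> exists ms, walk (BNode l r) (bsize l).+1 (true :: ms) = Some (v + (bsize l).+1).
Proof.
move=> Hv; have [ms W] := root_reach Hv; exists ms.
rewrite walkE child_root; case: r Hv W => [|r1 r2] Hv W; first by move: Hv; rewrite /vertex /=; lia.
rewrite /=; apply: lift_r => //=.
Qed.

Lemma walk_src_vertex t a s ms b : walk t a (s :: ms) = Some b -> vertex t a.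
Proof. by move=> /walk_cons [c [/child_vertex [] ? _] _]. Qed.

Lemma trich t u v : vertex t u -> vertex t v ->
  (exists ms, walk t u ms = Some v) \/ (exists ms, walk t v ms = Some u) \/
  exists w s ms1 ms2, walk t w (s :: ms1) = Some u /\ walk t w (~~ s :: ms2) = Some v.
Proof.
elim: t u v => [|l IHl r IHr] u v; first by rewrite /vertex /=; lia.
move=> Hu Hv.
have [->|neu] := eqVneq u (bsize l).+1; first by left; exact: root_reach.
have [->|nev] := eqVneq v (bsize l).+1; first by right; left; exact: root_reach.
move: Hu Hv; rewrite /vertex /= => Hu Hv.
have [ltu|geu] := ltnP u (bsize l).+1; have [ltv|gev] := ltnP v (bsize l).+1.
- have Hu' : vertex l u by rewrite /vertex; vsolve.
  have Hv' : vertex l v by rewrite /vertex; vsolve.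
  case: (IHl _ _ Hu' Hv') => [[ms W]|[[ms W]|[w [s [ms1 [ms2 [W1 W2]]]]]]].
  + left; exists ms; apply: lift_l W; lia.
  + right; left; exists ms; apply: lift_l W; lia.
  + have /andP [? ?] := walk_src_vertex W1.
    have W1' : walk (BNode l r) w (s :: ms1) = Some u by apply: lift_l W1; lia.
    have W2' : walk (BNode l r) w (~~ s :: ms2) = Some v by apply: lift_l W2; lia.
    right; right; exists w, s, ms1, ms2; split; [exact: W1'|exact: W2'].
- have Hu' : vertex l u by rewrite /vertex; vsolve.
  have Hv' : vertex r (v - (bsize l).+1) by rewrite /vertex; vsolve.
  have [ms1 W1] := root_l r Hu'; have [ms2 W2] := root_r l Hv'.
  rewrite subnK in W2; last lia.
  by right; right; exists (bsize l).+1, false, ms1, ms2.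
- have Hv' : vertex l v by rewrite /vertex; vsolve.
  have Hu' : vertex r (u - (bsize l).+1) by rewrite /vertex; vsolve.
  have [ms1 W1] := root_l r Hv'; have [ms2 W2] := root_r l Hu'.
  rewrite subnK in W2; last lia.
  by right; right; exists (bsize l).+1, true, ms2, ms1.
- have Hu' : vertex r (u - (bsize l).+1) by rewrite /vertex; vsolve.
  have Hv' : vertex r (v - (bsize l).+1) by rewrite /vertex; vsolve.
  have Eu : u = u - (bsize l).+1 + (bsize l).+1 by lia.
  have Ev : v = v - (bsize l).+1 + (bsize l).+1 by lia.
  case: (IHr _ _ Hu' Hv') => [[ms W]|[[ms W]|[w [s [ms1 [ms2 [W1 W2]]]]]]].
  + left; exists ms; rewrite Eu Ev; apply: lift_r W; lia.
  + right; left; exists ms; rewrite Eu Ev; apply: lift_r W; lia.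
  + have /andP [? ?] := walk_src_vertex W1.
    have W1' : walk (BNode l r) (w + (bsize l).+1) (s :: ms1) = Some u by rewrite Eu; apply: lift_r W1; lia.
    have W2' : walk (BNode l r) (w + (bsize l).+1) (~~ s :: ms2) = Some v by rewrite Ev; apply: lift_r W2; lia.
    right; right; exists (w + (bsize l).+1), s, ms1, ms2; split; [exact: W1'|exact: W2'].
Qed.

Lemma parent_exists t x : vertex t x -> x <> broot t ->
  exists p s, child s t p = Some x.
Proof.
elim: t x => [|l IHl r IHr] x; first by rewrite /vertex /=; lia.
rewrite /vertex /= => Hx nr.
have [ltx|gex] := ltnP x (bsize l).+1.
  have Hx' : vertex l x by rewrite /vertex; vsolve.
  have [->|ne] := eqVneq x (broot l).
    have E : child false (BNode l r) (bsize l).+1 = Some (broot l).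
      rewrite child_root.
      by case: l {IHl ltx nr Hx} Hx' => [|l1 l2]; rewrite /vertex /=; [lia|].
    by exists (bsize l).+1, false; exact: E.
  have [p [s E]] := IHl _ Hx' ltac:(by apply/eqP).
  have [/andP [? ?] _] := child_vertex E.
  have E' : child s (BNode l r) p = Some x by rewrite child_l //; lia.
  by exists p, s; exact: E'.
have Hx' : vertex r (x - (bsize l).+1) by rewrite /vertex; vsolve.
have [E|ne] := eqVneq (x - (bsize l).+1) (broot r).
  have E' : child true (BNode l r) (bsize l).+1 = Some x.
    rewrite child_root.
    case: r {IHr Hx} Hx' E => [|r1 r2]; rewrite /vertex /=; [lia|] => _ <-. congr Some; lia.
  by exists (bsize l).+1, true; exact: E'.
have [p [s E]] := IHr _ Hx' ltac:(by apply/eqP).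
have [/andP [? ?] _] := child_vertex E.
have E' : child s (BNode l r) (p + (bsize l).+1) = Some x.
  rewrite child_r; last lia.
  by rewrite addnK E /= subnK //; lia.
by exists (p + (bsize l).+1), s; exact: E'.
Qed.

Definition emb (T P : btree) (e : nat -> bool) (f : nat -> nat) :=
    (forall i, vertex P i -> vertex T (f i)) /\
    (forall i j, vertex P i -> vertex P j -> f i = f j -> i = j) /\
    (forall i, vertex P i -> i <> broot P ->
       forall p s, par P i = Some p -> child s P p = Some i ->
         if e i then child s T (f p) = Some (f i)
         else in_side_sub s T (f p) (f i)).

Lemma child_nonroot s t p x : child s t p = Some x -> x <> broot t.
Proof. by move=> /child_par E Ex; rewrite Ex par_root in E. Qed.

Lemma emb_edge T P e f s q x : emb T P e f -> child s P q = Some x ->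
  exists ms, walk T (f q) (s :: ms) = Some (f x).
Proof.
move=> [_ [_ He]] E; have [_ Vx] := child_vertex E.
have := He x Vx (child_nonroot E) q s (child_par E) E.
case: (e x) => [H|/side_walk //]; exists [::]; by rewrite walkE H.
Qed.

Lemma emb_edge1 T P e f s q x : emb T P e f -> e x = true -> child s P q = Some x ->
  child s T (f q) = Some (f x).
Proof.
move=> [_ [_ He]] ex E; have [_ Vx] := child_vertex E.
by have := He x Vx (child_nonroot E) q s (child_par E) E; rewrite ex.
Qed.

Lemma emb_walk_side T P e f a s ms b : emb T P e f -> walk P a (s :: ms) = Some b ->
  exists ms', walk T (f a) (s :: ms') = Some (f b).
Proof.
move=> Em; elim: ms a s b => [|s' ms IH] a s b /walk_cons [c [E W]].
  case: W => <-; exact: emb_edge Em E.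
have [ms1 W1] := emb_edge Em E; have [ms2 W2] := IH _ _ _ W.
have W3 : walk T (f a) ((s :: ms1) ++ s' :: ms2) = Some (f b) by rewrite (walk_catS _ W1).
exists (ms1 ++ s' :: ms2); exact: W3.
Qed.

Lemma emb_walk T P e f a ms b : emb T P e f -> walk P a ms = Some b ->
  exists ms', walk T (f a) ms' = Some (f b).
Proof.
move=> Em; case: ms => [[<-]|s ms W]; first by exists [::].
have [ms' W'] := emb_walk_side Em W; by exists (s :: ms').
Qed.

Lemma emb_sep T P e f x v ms : emb T P e f -> vertex P x -> vertex P v ->
  walk T (f x) ms = Some (f v) -> exists ms', walk P x ms' = Some v.
Proof.
move=> Em Vx Vv W.
case: (trich Vx Vv) => [//|[[ms2 W2]|[w [s [ms1 [ms2 [W1 W2]]]]]]].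
  case: ms2 W2 => [[->]|s ms2 W2]; first by exists [::].
  have [ms3 W3] := emb_walk_side Em W2.
  have := walk_catS ms W3; rewrite W => /walk_self //.
have [ms3 W3] := emb_walk_side Em W1; have [ms4 W4] := emb_walk_side Em W2.
have := walk_catS ms W3; rewrite W => W5.
case: (side_disj W5 W4).
Qed.

Lemma emb_contig T P e f a ms b : emb T P e f -> walk P a ms = Some b ->
  (forall k, 0 < k <= size ms -> exists c, walk P a (take k ms) = Some c /\ e c) ->
  walk T (f a) ms = Some (f b).
Proof.
move=> Em; elim: ms a => [|s ms IH] a; first by case=> ->.
move=> /walk_cons [c [E W]] H.
have [c' [Wc ec]] := H 1 isT.
rewrite /= take0 E /= in Wc; case: Wc => Ec; rewrite -Ec in ec.
rewrite walkE (emb_edge1 Em ec E) /=.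
apply: IH W _ => k /andP [k0 kl].
have [c2 [W2 e2]] := H k.+1 ltac:(rewrite /=; vsolve).
exists c2; split => //; move: W2; by rewrite /= E.
Qed.

Lemma set_contig_ne e i x : x <> i -> set_contig e i x = e x.
Proof. by move=> /eqP ne; rewrite /set_contig ifN. Qed.

Lemma caseX T P e i f : emb T P e f -> inX P i -> i <> broot P ->
  exists f', emb T P (set_contig e i) f'.
Proof.
move=> Em [Vi [cLi cRi]] nr.
have leaf : forall s', child s' P i = None by case.
have [p [s Ep]] := parent_exists Vi nr.
have [Vp _] := child_vertex Ep.
have [ms W] := emb_edge Em Ep.
have [y [Ey _]] := walk_cons W.
have pi : p <> i by move=> E; rewrite E leaf in Ep.
have Key : forall v, vertex P v -> v <> i -> y <> f v.
  move=> v Vv vi Eyv.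
  have [ms' W'] := @emb_sep T P e f p v [:: s] Em Vp Vv ltac:(by rewrite walkE Ey Eyv).
  case: ms' W' => [[Epv]|s' ms'' W'].
    by move: Ey; rewrite Eyv -Epv => /child_walk /walk_self.
  have [c [Ec Wc]] := walk_cons W'.
  have [Ess|ne] := eqVneq s' s.
    subst s'; rewrite Ep in Ec; case: Ec => Eic; subst c.
    case: ms'' {W'} Wc => [[Eiv]|s'' ms3 /walk_cons [c2 [Ec2 _]]]; [by apply: vi | by rewrite leaf in Ec2].
  have Es' : s' = ~~ s by case: s s' ne {Ep W Ey Ec W'} => [] [].
  subst s'.
  have [ms3 W3] := emb_walk_side Em W'.
  rewrite -Eyv in W3.
  exact: side_disj (child_walk Ey) W3.
pose f' x := if x == i then y else f x.
exists f'.
have [Hv [Hi He]] := Em.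
split; [|split].
- move=> x Vx; rewrite /f'; case: eqP => _; last exact: Hv.
  by have [] := child_vertex Ey.
- move=> x v Vx Vv; rewrite /f'.
  case: eqP => [->|xi]; case: eqP => [->|vi] //.
  + move=> E; by case: (Key v Vv vi).
  + move=> E; by case: (Key x Vx xi).
  + exact: Hi.
- move=> x Vx xr q s' Eq Ex.
  have Vq : vertex P q by have [] := child_vertex Ex.
  rewrite /f'; have [Exi|xi] := eqVneq x i.
    subst x. rewrite /set_contig !eqxx.
    have Eqp : q = p by move: (child_par Ep); rewrite Eq => - [].
    subst q; rewrite (child_side_uniq Ex Ep) ifN //; exact/eqP.
  have [Eqi|qi] := eqVneq q i; first by subst q; rewrite leaf in Ex.
  rewrite set_contig_ne; last exact/eqP.
  exact: He.
Qed.

Lemma iter_walk s t l a : iter_child s t l a = walk t a (nseq l s).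
Proof.
elim: l => [|l IH] //.
have -> : nseq l.+1 s = nseq l s ++ [:: s] by rewrite -addn1 nseqD.
rewrite walk_cat -IH /=; case: iter_child => //= b; by case: child.
Qed.

Lemma iter_cmp s t l1 l2 a b p : iter_child s t l1 a = Some p ->
  iter_child s t l2 b = Some p -> l1 <= l2 -> iter_child s t (l2 - l1) b = Some a.
Proof.
elim: l1 l2 p => [|l1 IH] l2 p /=; first by case=> ->; rewrite subn0.
case Ea: iter_child => [q|] //= Eq.
case: l2 => [|l2] //= .
case Eb: iter_child => [q'|] //= Eq' le.
have Eqq : q' = q by move: (child_par Eq) (child_par Eq') => -> [].
subst q'. rewrite subSS. exact: IH Ea Eb le.
Qed.

Lemma prefix_inj t a W k1 k2 b : k1 <= size W -> k2 <= size W ->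
  walk t a (take k1 W) = Some b -> walk t a (take k2 W) = Some b -> k1 = k2.
Proof.
wlog le : k1 k2 / k1 <= k2.
  move=> H h1 h2 W1 W2; case: (leqP k1 k2) => [l|l].
    exact: H W1 W2.
  symmetry; apply: H W2 W1 => //; exact: ltnW.
move=> h1 h2 W1; rewrite -(subnKC le) takeD (walk_catS _ W1) => /walk_self.
move/(congr1 size); rewrite size_take size_drop /=. 
case: ifP; lia.
Qed.

Lemma iter_S s t l a : iter_child s t l.+1 a = obind (child s t) (iter_child s t l a).
Proof. by []. Qed.

Lemma iter_Sl s t l a c : child s t a = Some c -> iter_child s t l.+1 a = iter_child s t l c.
Proof. by move=> E; rewrite !iter_walk /= E. Qed.

Lemma top_exists s P e p a : inA s P e p a -> exists a0, is_top_A s P e p a0.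
Proof.
move=> HA.
suff H : forall n a, (if s then a else bsize P - a) < n -> inA s P e p a ->
   exists a0, is_top_A s P e p a0 by exact: (H _ a (ltnSn _) HA).
clear HA; elim => [|n IH] {}a // lt [Va [l [El Hc]]].
have [[q [Eq ea]] | none] : (exists q, child s P q = Some a /\ e a) \/
     (forall q, child s P q = Some a -> e a = false).
  case Epa: (par P a) => [q|]; last by right => q /child_par; rewrite Epa.
  case: (eqVneq (child s P q) (Some a)) => [Eq|ne]; last first.
    right => q' Eq'; move: (child_par Eq'); rewrite Epa => -[Eqq]; subst q'.
    by rewrite Eq' eqxx in ne.
  case ea: (e a); [left; by exists q | by right].
- have [Vq _] := child_vertex Eq.
  apply: (IH q).
    have := walk_side (child_walk Eq); move: Vq lt; rewrite /vertex.
    case: s {IH El Hc Eq} => /= ? ? ?; lia.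
  split => //; exists l.+1; split; first by rewrite (iter_Sl _ Eq).
  case => [|m] // /andP [_ ml]; case: m ml => [|m] ml.
    by exists a; rewrite /= Eq.
  rewrite (iter_Sl _ Eq); apply: Hc; vsolve.
- exists a; split; first by split => //; exists l.
  move=> b [Vb [lb [Eb Hcb]]].
  case: (leqP l lb) => le.
    have := iter_cmp El Eb le.
    case Ek: (lb - l) => [|k] /=; first by case=> ->; exact: desc_refl.
    case Eq: iter_child => [q|] //= Eqa.
    have [c [Ec ec]] := Hcb k.+1 ltac:(vsolve).
    rewrite iter_S Eq /= Eqa in Ec; case: Ec => Eca; subst c.
    by rewrite (none _ Eqa) in ec.
  have := iter_cmp Eb El (ltnW le); rewrite iter_walk => /walk_desc //.
Qed.

Lemma bot_exists d P e i x : vertex P i -> inB' d P e i x ->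
  exists y, inB' d P e i y /\ forall c, child d P y = Some c -> e c = false.
Proof.
move=> Vi HB.
suff H : forall n x, (if d then bsize P - x else x) < n -> vertex P x -> inB' d P e i x ->
   exists y, inB' d P e i y /\ forall c, child d P y = Some c -> e c = false.
  apply: (H _ x (ltnSn _)) => //.
  case: (HB) => l [El _]; rewrite iter_walk in El; exact: (walk_vertex El Vi).
clear HB; elim => [|n IH] {}x // lt Vx [l [El Hc]].
case Ec: (child d P x) => [c|]; last by exists x; split; [exists l | move=> c'; rewrite Ec].
case ec: (e c); last by exists x; split; [exists l | move=> c'; rewrite Ec => -[<-]].
have [_ Vc] := child_vertex Ec.
apply: (IH c) => //.
  have := walk_side (child_walk Ec); move: Vc lt; rewrite /vertex.
  case: d {IH El Hc Ec} => /= ? ? ?; lia.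
exists l.+1; split; first by rewrite iter_S El.
move=> m /andP [m1 ml]; case: (ltnP m l.+1) => mlt.
  apply: Hc; vsolve.
have -> : m = l.+1 by lia.
by exists c; rewrite iter_S El.
Qed.

Lemma nseq_comm (x : bool) n ms : nseq n x ++ x :: ms = x :: nseq n x ++ ms.
Proof. by elim: n => //= n ->. Qed.

Lemma word_r0 (x y : bool) n ms : y = ~~ x ->
  exists u v, nseq n x ++ ms = u ++ nseq n x ++ v /\ (v = [::] \/ exists v', v = y :: v').
Proof.
move=> Ey; elim: ms => [|z ms [u [v [E Hv]]]]; first by exists [::], [::]; split; [|left].
have [Ez|Ez] : z = x \/ z = y by rewrite Ey; case: x z {Ey E} => [] []; auto.
  subst z; exists (x :: u), v; split => //; by rewrite nseq_comm E.
by exists [::], (z :: ms); split => //; right; exists ms; rewrite Ez.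
Qed.

Lemma word_m0 (x y : bool) ms : y = ~~ x -> exists u t, x :: ms = u ++ x :: nseq t y.
Proof.
move=> Ey; elim/last_ind: ms => [|ms z [u [t E]]]; first by exists [::], 0.
have [Ez|Ez] : z = x \/ z = y by rewrite Ey; case: x z {Ey E} => [] []; auto.
  by exists (x :: ms), 0; rewrite Ez cats1.
exists u, t.+1; rewrite -rcons_cons E rcons_cat /= Ez.
congr (_ ++ _ :: _); by elim: t {E} => //= t ->.
Qed.

Lemma word (x y : bool) m r ms : y = ~~ x -> (m = 0 \/ r = 0) ->
  exists u v, nseq m x ++ x :: ms ++ nseq r y = u ++ (nseq m x ++ x :: nseq r y) ++ v /\
    (v = [::] \/ exists v', v = y :: v').
Proof.
move=> Ey [->|->].
  have [u [t E]] := word_m0 ms Ey.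
  exists u, (nseq t y); split.
    by rewrite /= -cat_cons E -catA /= -!nseqD addnC.
  by case: t {E} => [|t]; [left|right; exists (nseq t y)].
have [u [v [E Hv]]] := word_r0 m.+1 ms Ey.
exists u, v; split => //.
have -> : nseq m x ++ x :: nseq 0 y = nseq m.+1 x by rewrite /= nseq_comm cats0.
have -> : nseq m x ++ x :: ms ++ nseq 0 y = nseq m.+1 x ++ ms by rewrite /= cats0 nseq_comm.
exact: E.
Qed.

Lemma take_nseq_cat (x : bool) k m s : k <= m -> take k (nseq m x ++ s) = nseq k x.
Proof.
move=> km; rewrite take_cat size_nseq; case: ltnP => h; first by rewrite take_nseq // ltnW.
have -> : k = m by lia. by rewrite subnn take0 cats0.
Qed.

Lemma caseY d T P e i f : emb T P e f -> inYgen d P e i -> i <> broot P ->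
  exists f', emb T P (set_contig e i) f'.
Proof.
move=> Em [Vi [_ [p [Epi [Epc [Hor [HAn [HBn Htop]]]]]]]] nr.
have [Hv [Hi He]] := Em.
set s1 := ~~ d in Epc Hor HAn HBn Htop.
have [Vp _] := child_vertex Epc.
have Ap : inA s1 P e p p.
  split => //; exists 0; split => // k /andP [h1 h2]; exfalso; lia.
have [a0 Ta0] := top_exists Ap.
have Ha0top := Htop a0 Ta0.
case: Ta0 => [[Va0 [m [Em_ Hcm]]] _].
have Bi : inB' d P e i i.
  exists 0; split => // k /andP [h1 h2]; exfalso; lia.
have [br [[r [Er Hcr]] Hbot]] := bot_exists Vi Bi.
rewrite iter_walk in Em_; rewrite iter_walk in Er.
have mr : m = 0 \/ r = 0.
  case: Hor => [HA1|HB1].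
    left; have Ea : a0 = p by apply/HA1; split => //; exists m; rewrite iter_walk.
    subst a0; move/walk_self: Em_; by case: m {Hcm}.
  right; have Eb : br = i by apply/HB1; exists r; rewrite iter_walk.
  subst br; move/walk_self: Er; by case: r {Hcr}.
pose W := nseq m s1 ++ s1 :: nseq r d.
have WP : walk P a0 W = Some br by rewrite /W (walk_catS _ Em_) walkE Epc.
have T1 : walk T (f a0) (nseq m s1) = Some (f p).
  apply: emb_contig Em Em_ _ => k /andP [k1 km]; rewrite size_nseq in km.
  rewrite take_nseq // -iter_walk; apply: Hcm; vsolve.
have [ms1 T2] := emb_edge Em Epc.
have T3 : walk T (f i) (nseq r d) = Some (f br).
  apply: emb_contig Em Er _ => k /andP [k1 km]; rewrite size_nseq in km.
  rewrite take_nseq // -iter_walk; apply: Hcr; vsolve.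
have T4 : walk T (f a0) (nseq m s1 ++ s1 :: ms1 ++ nseq r d) = Some (f br).
  by rewrite (walk_catS _ T1) -cat_cons (walk_catS _ T2) T3.
have [u [v [Ew Hv']]] := @word s1 d m r ms1 (esym (negbK d)) mr.
rewrite Ew in T4.
have [y0 [Ty0 T5]] := walk_cat_inv T4.
have [z [Tz Tzv]] := walk_cat_inv T5.
rewrite -/W in Tz T5.
pose N k := odflt 0 (walk P a0 (take k W)).
pose G k := odflt 0 (walk T y0 (take k W)).
have NS : forall k, k <= size W -> walk P a0 (take k W) = Some (N k).
  move=> k hk.
  have WP' : walk P a0 (take k W ++ drop k W) = Some br by rewrite cat_take_drop.
  have [b [E _]] := walk_cat_inv WP'. by rewrite /N E.
have GS : forall k, k <= size W -> walk T y0 (take k W) = Some (G k).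
  move=> k hk.
  have Tz' : walk T y0 (take k W ++ drop k W) = Some z by rewrite cat_take_drop.
  have [b [E _]] := walk_cat_inv Tz'. by rewrite /G E.
have NE : forall k b, k <= size W -> walk P a0 (take k W) = Some b -> N k = b.
  by move=> k b hk E; move: (NS k hk); rewrite E => -[].
have GE : forall k b, k <= size W -> walk T y0 (take k W) = Some b -> G k = b.
  by move=> k b hk E; move: (GS k hk); rewrite E => -[].
have Nstep : forall k, k < size W -> child (nth false W k) P (N k) = Some (N k.+1).
  move=> k hk; have := NS k.+1 hk.
  rewrite (take_nth false hk) -cats1 (walk_catS _ (NS k (ltnW hk))) walkE.
  by case: child => //= c [->].
have Gstep : forall k, k < size W -> child (nth false W k) T (G k) = Some (G k.+1).
  move=> k hk; have := GS k.+1 hk.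
  rewrite (take_nth false hk) -cats1 (walk_catS _ (GS k (ltnW hk))) walkE.
  by case: child => //= c [->].
have Ninj : forall k1 k2, k1 <= size W -> k2 <= size W -> N k1 = N k2 -> k1 = k2.
  move=> k1 k2 h1 h2 E; apply: (prefix_inj h1 h2 (NS _ h1)); rewrite E; exact: NS.
have Ginj : forall k1 k2, k1 <= size W -> k2 <= size W -> G k1 = G k2 -> k1 = k2.
  move=> k1 k2 h1 h2 E; apply: (prefix_inj h1 h2 (GS _ h1)); rewrite E; exact: GS.
have sW : size W = m + r.+1 by rewrite /W size_cat /= !size_nseq.
have N0 : N 0 = a0 by rewrite /N take0.
have G0 : G 0 = y0 by rewrite /G take0.
have Nbr : N (size W) = br by apply: NE => //; rewrite take_size.
have Gz : G (size W) = z by apply: GE => //; rewrite take_size.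
have Nm : N m.+1 = i.
  apply: NE; first lia.
  rewrite /W take_cat size_nseq ltnNge leqnSn /= subSnn /= take0 (walk_catS _ Em_).
  by rewrite walkE Epc.
have NA : forall k, k <= m -> inA s1 P e p (N k).
  move=> k hk.
  have Ek : walk P a0 (nseq k s1) = Some (N k) by rewrite -(take_nseq_cat _ (s1 :: nseq r d) hk) NS //; lia.
  split; first exact: walk_vertex Ek Va0.
  exists (m - k); split.
    by rewrite iter_walk -(walk_catS _ Ek) -nseqD subnKC.
  move=> j /andP [j1 j2]; rewrite iter_walk -(walk_catS _ Ek) -nseqD -iter_walk.
  apply: Hcm; vsolve.
have NB : forall j, j <= r -> inB' d P e i (N (m.+1 + j)).
  move=> j hj.
  have Ej : walk P a0 (take (m.+1 + j) W) = walk P i (nseq j d).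
    rewrite /W take_cat size_nseq ltnNge (_ : m <= m.+1 + j); last lia.
    rewrite /= (_ : m.+1 + j - m = j.+1); last lia.
    by rewrite /= take_nseq // (walk_catS _ Em_) walkE Epc.
  exists j; split; first by rewrite iter_walk -Ej NS //; lia.
  move=> k /andP [k1 k2]; apply: Hcr; vsolve.
have nthA : forall k, k <= m -> nth false W k = s1.
  move=> k hk; rewrite /W nth_cat size_nseq; case: ltnP => h; first by rewrite nth_nseq h.
  by have -> : k - m = 0 by lia.
have nthB : forall k, m < k < size W -> nth false W k = d.
  move=> k /andP [h1 h2]; rewrite /W nth_cat size_nseq ltnNge ltnW //=.
  case Ek: (k - m) => [|k']; first lia.
  by rewrite /= nth_nseq ifT //; lia.
have NOC : forall k s x, k <= size W -> child s P (N k) = Some x ->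
    (k < size W /\ x = N k.+1) \/ (k = size W /\ s = d).
  move=> k s x hk Ex.
  case: (leqP k m) => hkm.
    have Hd := HAn _ (NA k hkm).
    have Es : s = s1.
      case: (eqVneq s d) => [Esd|nsd]; first by subst s; rewrite Hd in Ex.
      by move: nsd; rewrite /s1; case: (s); case: (d).
    left; split; first lia.
    move: (Nstep k ltac:(lia)); rewrite nthA // -Es Ex; by case.
  have [j [Ej hj]] : exists j, k = m.+1 + j /\ j <= r by exists (k - m.+1); split; lia.
  have Hd := HBn _ (NB j hj); rewrite -Ej in Hd.
  have Es : s = d.
    case: (eqVneq s d) => [//|nsd].
    have Es1 : s = s1 by move: nsd; rewrite /s1; case: (s); case: (d).
    by subst s; rewrite Hd in Ex.
  case: (ltnP k (size W)) => hkW; last by right; split => //; lia.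
  left; split => //.
  move: (Nstep k hkW); rewrite nthB; last (apply/andP; lia).
  by rewrite -Es Ex; case.
have Classif : forall ms x, walk P a0 ms = Some x ->
    (exists k, k <= size W /\ x = N k) \/
    (exists c ms', child d P br = Some c /\ walk P c ms' = Some x).
  move=> ms x /walk_desc; elim => [|b c s _ IH Ebc].
    by left; exists 0; split => //.
  case: IH => [[k [hk Ebk]]|[c0 [ms' [Ec0 Wc]]]].
    subst b; case: (NOC k s c hk Ebc) => [[lt ->]|[Ek Es]]; first by left; exists k.+1.
    right; exists c, [::]; split => //; by rewrite -Nbr -Ek -Es.
  right; exists c0, (rcons ms' s); split => //.
  by rewrite -cats1 (walk_catS _ Wc) walkE Ebc.
have VN : forall k, k <= size W -> vertex P (N k).
  move=> k hk; exact: walk_vertex (NS k hk) Va0.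
have Vy0 : vertex T y0 by apply: walk_vertex Ty0 _; exact: Hv.
have VG : forall k, k <= size W -> vertex T (G k).
  move=> k hk; exact: walk_vertex (GS k hk) Vy0.
have TG : forall k, k <= size W -> walk T (f a0) (u ++ take k W) = Some (G k).
  by move=> k hk; rewrite (walk_catS _ Ty0) GS.
have TGb : forall k, k <= size W -> walk T (G k) (drop k W ++ v) = Some (f br).
  move=> k hk; have := T5; rewrite -{1}(cat_take_drop k W) -catA.
  by rewrite (walk_catS _ (GS k hk)).
have NotS : forall x, vertex P x -> (forall k, k <= size W -> x <> N k) ->
    forall k, k <= size W -> G k <> f x.
  move=> x Vx nS k hk EG.
  have := TG k hk; rewrite EG => TG'.
  have [ms' Wx] := emb_sep Em Va0 Vx TG'.
  case: (Classif _ _ Wx) => [[k' [hk' Ex]]|[c [ms'' [Ec Wc]]]]; first exact: nS hk' Ex.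
  have [ms3 W3] := emb_walk Em Wc.
  have [ms4 W4] := emb_edge Em Ec.
  have : walk T (f br) ((d :: ms4) ++ ms3 ++ drop k W ++ v) = Some (f br).
    by rewrite (walk_catS _ W4) (walk_catS _ W3) -EG TGb.
  by move/walk_self.
pose ns := mkseq N (size W).+1.
pose gs := mkseq G (size W).+1.
pose f' x := nth (f x) gs (index x ns).
have uns : uniq ns.
  apply/mkseq_uniqP => k1 k2; rewrite !inE => h1 h2; apply: Ninj; lia.
have fN : forall k, k <= size W -> f' (N k) = G k.
  move=> k hk; rewrite /f'.
  have -> : index (N k) ns = k.
    have hk' : k < size ns by rewrite size_mkseq.
    have E1 : nth 0 ns k = N k by rewrite nth_mkseq // ltnS.
    by rewrite -{1}E1 index_uniq.
  by rewrite nth_mkseq.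
have fO : forall x, (forall k, k <= size W -> x <> N k) -> f' x = f x.
  move=> x H; rewrite /f' memNindex ?nth_default //; last first.
    apply/negP; rewrite /ns /mkseq => /mapP [k]; rewrite mem_iota => /andP [_ hk] E.
    apply: (H k) => //; lia.
  by rewrite /gs /ns !size_mkseq.
have classify : forall x, (exists k, k <= size W /\ x = N k) \/
    (forall k, k <= size W -> x <> N k).
  move=> x; case: (boolP (x \in ns)) => [|nin].
    rewrite /ns /mkseq => /mapP [k]; rewrite mem_iota => /andP [_ hk] E.
    left; exists k; split => //; lia.
  right => k hk E; move: nin; rewrite E /ns /mkseq; move/negP; apply.
  apply/mapP; exists k => //; rewrite mem_iota; lia.
have a0i : a0 <> i.
  move=> E; have := Ninj 0 m.+1 ltac:(lia) ltac:(lia); rewrite N0 Nm E => /(_ erefl) //.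
exists f'; split; [|split].
- move=> x Vx; case: (classify x) => [[k [hk ->]]|nS]; first by rewrite fN //; exact: VG.
  rewrite fO //; exact: Hv.
- move=> x x' Vx Vx'.
  case: (classify x) => [[k [hk ->]]|nS]; case: (classify x') => [[k' [hk' ->]]|nS'].
  + by rewrite !fN // => /Ginj -> //.
  + rewrite fN // fO // => E; by case: (NotS _ Vx' nS' k hk).
  + rewrite fN // fO // => E; by case: (NotS _ Vx nS k' hk').
  + rewrite !fO //; exact: Hi.
- move=> x Vx xr q s Eq Ex.
  case: (classify x) => [[k [hk Exk]]|nSx].
    subst x; rewrite fN //; case: k hk Eq Ex xr Vx => [|k] hk Eq Ex xr Vx.
      have qS : forall k', k' <= size W -> q <> N k'.
        move=> k' hk' Eqk; subst q.
        have := walk_catS [:: s] (NS k' hk'); rewrite walkE Ex /= N0 => W6.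
        by move/walk_self: W6; case: (take k' W).
      rewrite fO //; rewrite N0 in Ex xr Vx Eq *.
      rewrite set_contig_ne //.
      case: Ha0top => [//|ea0].
      have := He a0 Vx xr q s Eq Ex; rewrite ea0 => /side_walk [ms W6].
      apply/side_walk; exists (ms ++ u); by rewrite -cat_cons (walk_catS _ W6) Ty0 G0.
    have hk' : k < size W by lia.
    have Eqk : q = N k by move: (child_par (Nstep k hk')); rewrite Eq => -[].
    subst q; rewrite fN; last lia.
    have Es := child_side_uniq Ex (Nstep k hk'); subst s.
    have Gs := Gstep k hk'.
    case: (set_contig e i (N k.+1)) => //.
    by apply/side_walk; exists [::]; rewrite walkE Gs.
  rewrite (fO x nSx).
  have xi : x <> i by move=> E; apply: (nSx m.+1); [lia | rewrite Nm].
  case: (classify q) => [[k [hk Eqk]]|nSq].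
    subst q; case: (NOC k s x hk Ex) => [[lt Exk]|[Ek Es]]; first by case: (nSx k.+1 lt Exk).
    subst s; rewrite fN // Ek Gz; rewrite Ek Nbr in Ex.
    rewrite set_contig_ne // (Hbot x Ex).
    have [ms W6] := emb_edge Em Ex.
    case: Hv' Tzv => [->|[v' ->]] Tzv.
      by case: Tzv => ->; apply/side_walk; exists ms.
    apply/side_walk; exists (v' ++ d :: ms).
    by rewrite -cat_cons (walk_catS _ Tzv) W6.
  rewrite (fO q nSq) set_contig_ne //; exact: He.
Qed.

Theorem theorem11 (P : btree) (e : nat -> bool) (i : nat) :
  (inX P i \/ inY P e i \/ inY' P e i) ->
  vertex P i -> i <> broot P -> e i = false ->
  forall (n : nat) (T : btree),
    Tn_avoid n P e T <-> Tn_avoid n P (set_contig e i) T.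
Proof.
move=> H Vi nr ei n T; rewrite /Tn_avoid /avoids.
split => -[Hs Hn]; split => // C; apply: Hn.
  case: C => f [Hv [Hi He]]; exists f; split => //; split => // x Vx xr q s Eq Ex.
  have := He x Vx xr q s Eq Ex.
  rewrite /set_contig; case: eqP => [_|_]; case: (e x) => // Ec.
  by apply/side_walk; exists [::]; rewrite walkE Ec.
have [f Em] : exists f, emb T P e f by case: C => f Hf; exists f.
have [f' Em'] : exists f', emb T P (set_contig e i) f'.
  case: H => [HX|[HY|HY']]; [exact: (caseX Em HX nr) | exact: (caseY Em HY nr) | exact: (caseY Em HY' nr)].
by exists f'.
Qed.
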